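(* Let $a\ge b\ge1$ be integers with either $b\ge2$, or $b=1$ and $a\ge5$, and define $c_j,d_j$ ($j\in\mathbb Z_+$) by $c_0=d_0=0$, $c_1=d_1=1$, $c_{k+2}+c_k=a d_{k+1}$, $d_{k+2}+d_k=b c_{k+1}$. Then for all $k\ge0$: $$bc_{k+1}^2+ad_k^2-abc_{k+1}d_k+abc_{k+1}-2ad_k+a>0,$$ $$bc_k^2+ad_{k+1}^2-abc_kd_{k+1}-2bc_k+abd_{k+1}+b>0.$$
   Context: $\mathbb Z_+=\{0,1,2,\dots\}$. *)

(* Defs.v *)
From Stdlib Require Import ZArith.
Open Scope Z_scope.

(* cd a b n = (c_n, c_{n+1}, d_n, d_{n+1}) where
   c_0=d_0=0, c_1=d_1=1, c_{k+2} = a d_{k+1} - c_k, d_{k+2} = b c_{k+1} - d_k. *)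
Fixpoint cd4 (a b : Z) (n : nat) : Z * Z * Z * Z :=
  match n with
  | O => (0, 1, 0, 1)
  | S m => let '(c0, c1, d0, d1) := cd4 a b m in
           (c1, a * d1 - c0, d1, b * c1 - d0)
  end.

Definition cseq (a b : Z) (n : nat) : Z := let '(c, _, _, _) := cd4 a b n in c.
Definition dseq (a b : Z) (n : nat) : Z := let '(_, _, d, _) := cd4 a b n in d.

Lemma cseq_rec a b k : cseq a b (S (S k)) + cseq a b k = a * dseq a b (S k).
Proof. unfold cseq, dseq; simpl; destruct (cd4 a b k) as [[[c0 c1] d0] d1]; simpl; ring. Qed.
Lemma dseq_rec a b k : dseq a b (S (S k)) + dseq a b k = b * cseq a b (S k).
Proof. unfold cseq, dseq; simpl; destruct (cd4 a b k) as [[[c0 c1] d0] d1]; simpl; ring. Qed.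
Lemma cseq_init a b : cseq a b 0 = 0 /\ cseq a b 1 = 1 /\ dseq a b 0 = 0 /\ dseq a b 1 = 1.
Proof. repeat split. Qed.

(* Main.v *)
Require Import Defs.
From Stdlib Require Import ZArith Lia Psatz.
Open Scope Z_scope.

Lemma inv_cd (a b : Z) : a * b >= 4 -> forall m : nat, exists e f,
  cd4 a b (2 * m)%nat = (a * e, f, b * e, f) /\ 0 <= e /\ 2 * e <= f /\
  f ^ 2 + a * b * e ^ 2 - a * b * e * f = 1.
Proof.
  intros Ht m; induction m as [|m IH].
  - exists 0, 1. simpl. rewrite !Z.mul_0_r. repeat split; lia.
  - destruct IH as [e [f [H1 [H2 [H3 H4]]]]].
    exists (f - e), (a * b * (f - e) - f).
    replace (2 * S m)%nat with (S (S (2 * m))) by lia.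
    remember (2 * m)%nat as n. simpl cd4. rewrite H1.
    split. { f_equal; [f_equal; [f_equal|]|]; ring. }
    split. lia. split.
    + assert (Hab : a * b - 4 >= 0) by lia.
      nia.
    + transitivity (f ^ 2 + a * b * e ^ 2 - a * b * e * f); [ring | exact H4].
Qed.

Theorem lemma3p6 (a b : Z) :
  a >= b -> b >= 1 -> (b >= 2 \/ (b = 1 /\ a >= 5)) ->
  forall k : nat,
    b * cseq a b (S k) ^ 2 + a * dseq a b k ^ 2
      - a * b * cseq a b (S k) * dseq a b k + a * b * cseq a b (S k)
      - 2 * a * dseq a b k + a > 0 /\
    b * cseq a b k ^ 2 + a * dseq a b (S k) ^ 2
      - a * b * cseq a b k * dseq a b (S k) - 2 * b * cseq a b k
      + a * b * dseq a b (S k) + b > 0.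
Proof.
  intros Hab Hb Hc k.
  assert (Ht : a * b >= 4) by (destruct Hc as [Hc|[Hc1 Hc2]]; nia).
  assert (Ha : a >= 1) by lia.
  destruct (Nat.Even_or_Odd k) as [[m Hm]|[m Hm]]; subst k;
  destruct (inv_cd a b Ht m) as [e [f [H1 [H2 [H3 H4]]]]].
  - remember (2 * m)%nat as n. unfold cseq, dseq. simpl cd4. rewrite !H1. cbv beta iota.

    split.
    + replace (b * f ^ 2 + a * (b * e) ^ 2 - a * b * f * (b * e) + a * b * f - 2 * a * (b * e) + a)
      with (b * (f ^ 2 + a * b * e ^ 2 - a * b * e * f) + a * b * (f - 2 * e) + a) by ring.
      rewrite H4. nia.
    + replace (b * (a * e) ^ 2 + a * f ^ 2 - a * b * (a * e) * f - 2 * b * (a * e) + a * b * f + b)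
        with (a * (f ^ 2 + a * b * e ^ 2 - a * b * e * f) + a * b * (f - 2 * e) + b) by ring.
      rewrite H4. nia.
  - replace (S (2 * m + 1)) with (S (S (2 * m))) by lia.
    replace (2 * m + 1)%nat with (S (2 * m)) by lia.
    remember (2 * m)%nat as n. unfold cseq, dseq. simpl cd4. rewrite !H1. cbv beta iota.
    assert (Hk : a * b * (f - e) - 2 * f + 2 >= 2) by nia.
    split.
    + replace (b * (a * f - a * e) ^ 2 + a * f ^ 2 - a * b * (a * f - a * e) * f + a * b * (a * f - a * e) - 2 * a * f + a)
        with (a * (f ^ 2 + a * b * e ^ 2 - a * b * e * f) + a * (a * b * (f - e) - 2 * f + 1)) by ring.
      rewrite H4. nia.
    + replace (b * f ^ 2 + a * (b * f - b * e) ^ 2 - a * b * f * (b * f - b * e) - 2 * b * f + a * b * (b * f - b * e) + b)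
        with (b * (f ^ 2 + a * b * e ^ 2 - a * b * e * f) + b * (a * b * (f - e) - 2 * f + 1)) by ring.
      rewrite H4. nia.
Qed.
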